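(* For every sufficiently small $\eta>0$ there exists $\nu_0>0$ such that for every $\nu\in(0,\nu_0]$ there exists $\beta_0>0$ such that for every $\beta\in(0,\beta_0]$ there exists $\alpha_0>0$ such that for every $\alpha\in(0,\alpha_0]$ there exists $n_0$ such that for all $n\ge n_0$ the following holds. Let $\hat G$ be an $(\alpha,\eta,\nu)$-superextremal biclique on $n$ vertices with partition $V(\hat G)=A\uplus B$, let $M$ be a matching in $\hat G[B]$ with $|E(M)|\le\alpha n$, and set $Z=E(M)$. Suppose that $\hat G[A]$ has no edges, the edge set of $\hat G[B]$ is exactly $E(M)$, and for every edge $ab\in E(\hat G)$ with $a\in A,b\in B$ we have $\max\{d_{\hat G}(a,B),d_{\hat G}(b,A)\}\ge(1/2-\eta)n$. Then for every directed Hamilton cycle $\vec H$ of $\hat G$ and every edge $e\in E(H)\setminus Z$, there are at least $\beta n^2$ pairs $(e',i)$ with $e'\in E(\hat G)\setminus E(H)$ and $i\in\{1,2\}$ such that the switching $s_i(\vec H;e,e')$ is admissible (with respect to $\hat G$).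
   Context: $d_G(v,X)$ is the number of neighbours of $v$ in $X$. A graph $G$ on $n$ vertices is an $(\alpha,\varepsilon,\nu)$-superextremal biclique if there is a partition $V(G)=A\uplus B$ with: (B1) $0\le |B|-|A|\le\alpha n$; (B2) $d(a,B)\ge(1/2-\varepsilon)n$ for all but at most $\alpha n$ vertices $a\in A$; (B3) $d(a,B)\ge\nu n$ for all $a\in A$; (B4) $d(b,A)\ge(1/2-\varepsilon)n$ for all but at most $\alpha n$ vertices $b\in B$; (B5) $d(b,A)\ge(1/4-\varepsilon)n$ for all $b\in B$; (B6) if $|A|\ne\lfloor n/2\rfloor$, then $d(b,B)\le 2\nu n$ for all $b\in B$. A directed Hamilton cycle $\vec H$ is a Hamilton cycle $H$ with a cyclic orientation; its successor function $\pi$ sends $x$ to the head of the arc leaving $x$. For $e=x\pi(x)\in E(H)$ and $e'=x'y'\notin E(H)$ with endpoints labelled so that $x$ lies on the directed path of $\vec H$ from $y'$ to $x'$, let $H_1=(H-\{e,x'\pi(x'),\pi^{-1}(y')y'\})+\{e',x\pi(x'),\pi^{-1}(y')\pi(x)\}$ and $H_2=(H-\{e,x'\pi(x'),\pi^{-1}(y')y'\})+\{e',x\pi^{-1}(y'),\pi(x)\pi(x')\}$; $s_i(\vec H;e,e')$ is $H_i$ oriented to contain the arc $(x',y')$. It is admissible (with respect to a graph $G$) if $H_i\subseteq G$. *)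

(* Defs.v *)
From Stdlib Require Import Reals.
From mathcomp Require Import all_boot fingroup perm.
Local Open Scope R_scope.

Set Implicit Arguments.
Unset Strict Implicit.
Unset Printing Implicit Defensive.

Definition Rltb_ (x y : R) : bool := if Rlt_dec x y then true else false.

Section Defs.
Variable T : finType.

Definition simple_graph (adj : rel T) : Prop :=
  (forall u v, adj u v = adj v u) /\ (forall u, ~~ adj u u).

Definition deg_in (adj : rel T) (v : T) (X : {set T}) : nat :=
  #|[set u in X | adj v u]|.

Definition edge_set (adj : rel T) : {set {set T}} :=
  [set e : {set T} | [exists u : T, exists v : T, adj u v && (e == [set u; v])]].

Definition card_low (adj : rel T) (X Y : {set T}) (t : R) : nat :=
  #|[set v in X | Rltb_ (INR (deg_in adj v Y)) t]|.

Definition superextremal (adj : rel T) (A B : {set T}) (alpha eps nu : R) : Prop :=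
  let n := INR #|T| in
  (A :&: B = set0 /\ A :|: B = setT) /\
  [/\
      ((#|A| <= #|B|)%N /\ (INR #|B| - INR #|A| <= alpha * n)),
      (INR (card_low adj A B ((1/2 - eps) * n)) <= alpha * n),
      (forall a, a \in A -> (nu * n <= INR (deg_in adj a B))) &
   [/\
      (INR (card_low adj B A ((1/2 - eps) * n)) <= alpha * n),
      (forall b, b \in B -> ((1/4 - eps) * n <= INR (deg_in adj b A))) &
      (#|A| <> #|T| ./2 -> forall b, b \in B -> (INR (deg_in adj b B) <= 2 * nu * n))]].

Definition matching_in (adj : rel T) (X : {set T}) (Z : {set {set T}}) : Prop :=
  (forall e, e \in Z -> exists u v, [/\ u \in X, v \in X, adj u v & e = [set u; v]]) /\
  (forall e f, e \in Z -> f \in Z -> e <> f -> [disjoint e & f]).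

(* A directed Hamilton cycle of G, given by its successor function pi:
   a cyclic permutation of all vertices with every arc x -> pi x an edge of G. *)
Definition dir_ham_cycle (adj : rel T) (pi : {perm T}) : Prop :=
  (3 <= #|T|)%N /\ (forall x, adj x (pi x)) /\ (forall x y, fconnect pi x y).

Definition ham_edges (pi : {perm T}) : {set {set T}} :=
  [set [set x; pi x] | x : T].

(* The edge sets of H_1 (i = false) and H_2 (i = true) for
   e = x pi(x) and e' = x'y' (labelled as in the definition). *)
Definition switch_edges (pi : {perm T}) (i : bool) (x x' y' : T) : {set {set T}} :=
  let pim := (pi^-1)%g y' in
  (ham_edges pi :\: [set [set x; pi x]; [set x'; pi x']; [set pim; y']])
  :|: (if i
       then [set [set x'; y']; [set x; pim]; [set pi x; pi x']]
       else [set [set x'; y']; [set x; pi x']; [set pim; pi x]]).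

(* The pairs (e', i) with e' in E(G) \ E(H) such that s_i(H; e, e') is
   admissible, where e = x pi(x).  The labelling (x', y') of e' must satisfy
   "x lies on the directed path of H from y' to x'". *)
Definition admissible_pairs (adj : rel T) (pi : {perm T}) (x : T)
  : {set {set T} * bool} :=
  [set p : {set T} * bool |
     (p.1 \in edge_set adj :\: ham_edges pi) &&
     [exists x' : T, exists y' : T,
        [&& p.1 == [set x'; y'],
            (findex pi y' x <= findex pi y' x')%N &
            (switch_edges pi p.2 x x' y' \subset edge_set adj)]]].

End Defs.

(* Main.v *)
Require Import Defs.
From Stdlib Require Import Reals Lra Lia.
From mathcomp Require Import all_boot fingroup perm zify.

Module Part1.
Local Open Scope nat_scope.
Set Implicit Arguments. Unset Strict Implicit. Unset Printing Implicit Defensive.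

Section Pos.
Variable T : finType.
Variable pi : {perm T}.
Hypothesis hcon : forall x y, fconnect pi x y.

Lemma order_all v : fingraph.order pi v = #|T|.
Proof.
rewrite /fingraph.order; apply/eqP; rewrite eqn_leq max_card /=.
by apply: subset_leq_card; apply/subsetP=> y _; rewrite inE hcon.
Qed.

Lemma fidx_lt x v : (findex pi x v < #|T|)%N.
Proof. by rewrite -(order_all x); apply: findex_max. Qed.

Lemma iter_fidx x v : iter (findex pi x v) pi x = v.
Proof. exact: iter_findex. Qed.

Lemma fidx_iter x i : (i < #|T|)%N -> findex pi x (iter i pi x) = i.
Proof. by move=> h; apply: findex_iter; rewrite order_all. Qed.

Lemma iterT x : iter #|T| pi x = x.
Proof. by have := iter_order (@perm_inj _ pi) x; rewrite order_all. Qed.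

Lemma fidx_formula x y z :
  findex pi y z = if (findex pi x y <= findex pi x z)%N
                  then (findex pi x z - findex pi x y)%N
                  else (#|T| - findex pi x y + findex pi x z)%N.
Proof.
have hy := fidx_lt x y; have hz := fidx_lt x z.
have Ey := iter_fidx x y; have Ez := iter_fidx x z.
move: (findex pi x y) (findex pi x z) hy hz Ey Ez => a b ha hb Ey Ez.
case: leqP => h.
- have E : z = iter (b - a) pi y by rewrite -Ey -iterD subnK.
  rewrite E fidx_iter //; lia.
- have E : z = iter (#|T| - a + b) pi y.
    rewrite -Ey -iterD addnAC subnK; last by lia.
    by rewrite iterD iterT.
  rewrite E fidx_iter //; lia.
Qed.

Lemma fidx_succ x v : findex pi x (pi v) =
  if (findex pi x v + 1 < #|T|)%N then (findex pi x v + 1)%N else 0%N.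
Proof.
have hv := fidx_lt x v.
have E : pi v = iter (findex pi x v + 1) pi x by rewrite addn1 iterS iter_fidx.
case: ifP => h; first by rewrite E fidx_iter.
rewrite E; have -> : (findex pi x v + 1 = #|T|)%N by lia.
by rewrite iterT findex0.
Qed.

Lemma fidx_pred x v : v != x -> findex pi x ((pi^-1)%g v) = (findex pi x v - 1)%N.
Proof.
move=> hv; have := fidx_succ x ((pi^-1)%g v); rewrite permKV.
have := findex_eq0 pi x v; rewrite [x == v]eq_sym (negbTE hv).
case: ifP => _ /eqP; lia.
Qed.

Definition cond x x' y' := (findex pi y' x <= findex pi y' x')%N.

Lemma order_switch x s t : s != x -> t != x ->
  ~~ cond x ((pi^-1)%g s) (pi t) -> cond x ((pi^-1)%g t) (pi s).
Proof.
move=> hs ht; rewrite /cond.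
rewrite (fidx_formula x (pi t) x) (fidx_formula x (pi t) ((pi^-1)%g s)).
rewrite (fidx_formula x (pi s) x) (fidx_formula x (pi s) ((pi^-1)%g t)).
rewrite !fidx_succ !fidx_pred // findex0.
have := findex_eq0 pi x s; have := findex_eq0 pi x t.
rewrite [x == s]eq_sym (negbTE hs) [x == t]eq_sym (negbTE ht).
have := fidx_lt x s; have := fidx_lt x t.
move: (findex pi x s) (findex pi x t) => a b ha hb /eqP hb0 /eqP ha0.
repeat case: ifP; lia.
Qed.
End Pos.

End Part1.
Import Part1.

Module Part2.
Local Open Scope nat_scope.
Set Implicit Arguments. Unset Strict Implicit. Unset Printing Implicit Defensive.

Section Inj.
Variable T : finType.
Variable adj : rel T.
Hypothesis hsym : forall u v, adj u v = adj v u.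
Variable pi : {perm T}.
Hypothesis hcon : forall x y, fconnect pi x y.
Hypothesis hham : forall y, adj y (pi y).
Variable x : T.
Variable X : {set T}.
Local Notation pinv := (pi^-1)%g.

Lemma edgeP u v : adj u v -> [set u; v] \in edge_set adj.
Proof. by move=> h; rewrite inE; apply/existsP; exists u; apply/existsP; exists v; rewrite h eqxx. Qed.

Lemma edgeE u v : adj u v -> [exists u', exists v', adj u' v' && ([set u;v] == [set u';v'])].
Proof. by move=> h; apply/existsP; exists u; apply/existsP; exists v; rewrite h eqxx. Qed.

Lemma set2_sides a b c d : a \in X -> b \notin X -> c \in X -> d \notin X ->
  [set a; b] = [set c; d] -> a = c /\ b = d.
Proof.
move=> ha hb hc hd E.
have Ha : a \in [set c; d] by rewrite -E set21.
have Hb : b \in [set c; d] by rewrite -E set22.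
rewrite !inE in Ha Hb.
case/orP: Ha => /eqP Ha; last by subst; rewrite ha in hd.
case/orP: Hb => /eqP Hb; first by subst; rewrite hc in hb.
by [].
Qed.

Lemma switch_sub b x' y' :
  adj x' y' ->
  (if b then adj x (pinv y') && adj (pi x) (pi x')
        else adj x (pi x') && adj (pinv y') (pi x)) ->
  switch_edges pi b x x' y' \subset edge_set adj.
Proof.
move=> h1 h2; apply/subsetP=> e; rewrite /switch_edges.
case/setUP.
  case/setDP=> /imsetP [y _ ->] _; exact: edgeP.
case: b h2 => /andP [h2 h3]; rewrite !inE -orbA => /or3P [] /eqP ->.
all: apply: edgeE => //.
Qed.

Definition fmap (st : T * T) : {set T} * bool :=
  if cond pi x (pinv st.1) (pi st.2) then ([set pinv st.1; pi st.2], false)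
  else ([set pinv st.2; pi st.1], true).

Definition goodpair (st : T * T) : bool :=
  let s := st.1 in let t := st.2 in
  [&& s != x, t != x, adj x s, adj (pi x) t,
      pinv s \in X, pi t \notin X, pinv t \notin X, pi s \in X &
  [&& adj (pinv s) (pi t), adj (pinv t) (pi s),
      [set pinv s; pi t] \notin ham_edges pi & [set pinv t; pi s] \notin ham_edges pi]].

Lemma count_adm (P : {set T * T}) : (forall st, st \in P -> goodpair st) ->
  (#|P| <= #|admissible_pairs adj pi x|)%N.
Proof.
move=> hP.
have inj : {in P &, injective fmap}.
  move=> [s t] [s' t'] /hP /and5P [_ _ _ _ /and5P [h1 h2 h3 h4 _]]
                       /hP /and5P [_ _ _ _ /and5P [h1' h2' h3' h4' _]].
  rewrite /fmap /=.
  case: ifP => _; case: ifP => _ // [] E.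
  - have [E1 E2] := set2_sides h1 h2 h1' h2' E.
    by congr pair; [apply: (@perm_inj _ pinv) | apply: (@perm_inj _ pi)].
  - have [E1 E2] := set2_sides h4 h3 h4' h3' (etrans (setUC _ _) (etrans E (setUC _ _))).
    by congr pair; [apply: (@perm_inj _ pi) | apply: (@perm_inj _ pinv)].
rewrite -(card_in_imset inj); apply: subset_leq_card; apply/subsetP=> p.
case/imsetP=> [[s t]] /hP /and5P [hs ht hxs hxt /and5P [_ _ _ _ /and4P [a1 a2 n1 n2]]] ->.
rewrite /fmap /=; case: ifP => hc; rewrite inE /= in_setD.
- rewrite edgeP // n1 /=; apply/existsP; exists (pinv s); apply/existsP; exists (pi t).
  rewrite eqxx; move: hc; rewrite /cond => -> /=; apply: switch_sub => //=.
  by rewrite permKV permK hxs hsym hxt.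
- rewrite edgeP // n2 /=; apply/existsP; exists (pinv t); apply/existsP; exists (pi s).
  rewrite eqxx /=.
  have := order_switch hcon hs ht; rewrite hc => /(_ isT); rewrite /cond => -> /=.
  apply: switch_sub => //=.
  by rewrite permK permKV hxs hxt.
Qed.
End Inj.

End Part2.
Import Part2.

Module Part3.
Local Open Scope nat_scope.
Set Implicit Arguments. Unset Strict Implicit. Unset Printing Implicit Defensive.

Lemma count_pairs (T : finType) (S : {set T}) (F : T -> {set T}) (m : nat) :
  (forall s, s \in S -> m <= #|F s|)%N ->
  (#|S| * m <= #|[set st : T * T | (st.1 \in S) && (st.2 \in F st.1)]|)%N.
Proof.
move=> h.
have -> : #|[set st : T * T | (st.1 \in S) && (st.2 \in F st.1)]| = (\sum_(s in S) #|F s|)%N.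
  rewrite -sum1_card.
  rewrite (eq_bigl (fun st : T * T => (st.1 \in S) && (st.2 \in F st.1))); last by move=> p; rewrite inE.
  rewrite -(pair_big_dep (fun s => s \in S) (fun s t => t \in F s) (fun _ _ => 1%N)) /=.
  by apply: eq_bigr => s _; rewrite sum1_card.
rewrite -sum_nat_const; exact: leq_sum.
Qed.

Lemma count_pairs_swap (T : finType) (S : {set T}) (F : T -> {set T}) (m : nat) :
  (forall s, s \in S -> m <= #|F s|)%N ->
  (#|S| * m <= #|[set st : T * T | (st.2 \in S) && (st.1 \in F st.2)]|)%N.
Proof.
move=> /count_pairs h; apply: (leq_trans h).
set P := [set st : T * T | _].
have -> : [set st : T * T | (st.2 \in S) && (st.1 \in F st.2)] = [set (p.2, p.1) | p in P].
  apply/setP=> [[a b]]; rewrite !inE /=; apply/idP/imsetP.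
    by move=> H; exists (b, a); rewrite // inE.
  by move=> [[c d]]; rewrite inE /= => H [-> ->].
rewrite card_in_imset //; move=> [a b] [c d] _ _ /= [-> ->] //.
Qed.

End Part3.
Import Part3.

Module Part4.
Local Open Scope nat_scope.
Set Implicit Arguments. Unset Strict Implicit. Unset Printing Implicit Defensive.
Local Open Scope R_scope.

Lemma INR_div5 N : INR (N %/ 5) <= INR N / 5 /\ INR N / 5 - 1 <= INR (N %/ 5).
Proof.
have h1 : (N %/ 5 * 5 <= N)%N := leq_divM N 5.
have h2 : (N < (N %/ 5).+1 * 5)%N := ltn_ceil N (isT : (0 < 5)%N).
move/leP: h1 => h1; move/ltP: h2 => h2.
apply le_INR in h1; apply lt_INR in h2.
rewrite -multE mult_INR in h1. rewrite -multE mult_INR S_INR in h2.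
simpl in h1, h2. split; lra.
Qed.

Lemma num_F (N f : nat) (eta alpha : R) :
  0 < eta <= 1/100 -> 0 < alpha <= 1/100 -> 1000 <= INR N ->
  (1/4 - eta) * INR N - 5 - (2 * eta + alpha) * INR N <= INR f ->
  (N %/ 5 <= f)%N.
Proof.
move=> he ha hN hf; have [d1 _] := INR_div5 N.
apply/leP; apply INR_le.
have : (1/4 - eta) * INR N - 5 - (2 * eta + alpha) * INR N >= INR N / 5 by nra.
lra.
Qed.

Lemma num_final (N k c : nat) (nu alpha : R) :
  0 < nu <= 1 -> 0 < alpha <= nu / 100 -> 1000 <= INR N -> 100 <= nu * INR N ->
  nu * INR N - 4 * alpha * INR N - 1 <= INR k ->
  (k * (N %/ 5) <= c)%N ->
  nu / 10 * INR N ^ 2 <= INR c.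
Proof.
move=> hn ha hN hnN hk hc; have [_ d2] := INR_div5 N.
move/leP: hc => hc; apply le_INR in hc; rewrite -multE mult_INR in hc.
have h0 : 0 <= INR (N %/ 5) by apply pos_INR.
have hk' : 0.95 * nu * INR N <= INR k by nra.
have : 0.95 * nu * INR N * (INR N / 5 - 1) <= INR k * INR (N %/ 5).
  apply Rmult_le_compat; nra.
have : 0 <= nu * INR N * (INR N - 11) by apply Rmult_le_pos; nra.
rewrite /pow; nra.
Qed.

End Part4.
Import Part4.

Module Part5.
Local Open Scope nat_scope.
Set Implicit Arguments. Unset Strict Implicit. Unset Printing Implicit Defensive.

Lemma card5 (T : finType) (a b c d e : T) : (#|[set a; b; c; d; e]| <= 5)%N.
Proof.
apply: (leq_trans _ (card_size [:: a; b; c; d; e])).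
apply: subset_leq_card; apply/subsetP=> z; rewrite !inE.
by rewrite -!orbA.
Qed.

Lemma cardsD_ge (T : finType) (A B : {set T}) : (#|A| <= #|A :\: B| + #|B|)%N.
Proof. rewrite cardsD; have := subset_leq_card (subsetIr A B); have := subset_leq_card (subsetIl A B); lia. Qed.

Lemma cardsU_le (T : finType) (A B : {set T}) : (#|A :|: B| <= #|A| + #|B|)%N.
Proof. exact: (leq_card_setU A B).1. Qed.

Lemma mem_pimset (T : finType) (p : {perm T}) (L : {set T}) s :
  (s \in p @: L) = ((p^-1)%g s \in L).
Proof. by rewrite -{1}(permKV p s) mem_imset //; apply: perm_inj. Qed.

Lemma mem_pimset' (T : finType) (p : {perm T}) (L : {set T}) s :
  (s \in (p^-1)%g @: L) = (p s \in L).
Proof. by rewrite -{1}(permK p s) mem_imset //; apply: perm_inj. Qed.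

End Part5.
Import Part5.

Module Part6.
Local Open Scope nat_scope.
Set Implicit Arguments. Unset Strict Implicit. Unset Printing Implicit Defensive.
Local Open Scope R_scope.

Lemma ham_pair (T : finType) (pi : {perm T}) u v :
  u != v -> [set u; v] \in ham_edges pi -> v = pi u \/ u = pi v.
Proof.
move=> huv /imsetP [y _ E].
have Hu : u \in [set y; pi y] by rewrite -E set21.
have Hv : v \in [set y; pi y] by rewrite -E set22.
rewrite !inE in Hu Hv.
case/orP: Hu => /eqP Hu; case/orP: Hv => /eqP Hv; subst.
- by rewrite eqxx in huv.
- by left.
- by right.
- by rewrite eqxx in huv.
Qed.

Section Core.
Variables (T : finType) (adj : rel T) (A B : {set T}) (Z : {set {set T}}).
Variables (alpha eta nu : R) (pi : {perm T}) (x : T).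
Local Notation pinv := (pi^-1)%g.
Local Notation N := (INR #|T|).

Hypotheses (he : 0 < eta <= 1/100) (hn : 0 < nu <= 1) (ha : 0 < alpha <= nu/100)
  (hN : 1000 <= N) (hnN : 100 <= nu * N).
Hypothesis hsym : forall u v, adj u v = adj v u.
Hypothesis hirr : forall u, ~~ adj u u.
Hypothesis hAB : A :&: B = set0.
Hypothesis hAuB : A :|: B = setT.
Hypothesis hB1 : INR #|B| - INR #|A| <= alpha * N.
Hypothesis hB2 : INR (card_low adj A B ((1/2 - eta) * N)) <= alpha * N.
Hypothesis hB3 : forall a, a \in A -> nu * N <= INR (deg_in adj a B).
Hypothesis hB5 : forall b, b \in B -> (1/4 - eta) * N <= INR (deg_in adj b A).
Hypothesis hZ1 : forall e, e \in Z -> exists u v, [/\ u \in B, v \in B, adj u v & e = [set u; v]].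
Hypothesis hZ : INR #|Z| <= alpha * N.
Hypothesis hAind : forall u v, u \in A -> v \in A -> ~~ adj u v.
Hypothesis hBZ : forall u v, u \in B -> v \in B -> adj u v -> [set u; v] \in Z.
Hypothesis hham : forall y, adj y (pi y).
Hypothesis hcon : forall x y, fconnect pi x y.
Hypothesis hxZ : [set x; pi x] \notin Z.

Lemma inB v : (v \in B) = (v \notin A).
Proof.
have h1 : v \in A :|: B by rewrite hAuB inE.
have h2 : v \notin A :&: B by rewrite hAB inE.
move: h1 h2; rewrite !inE; by case: (v \in A); case: (v \in B).
Qed.

Lemma cardAB : (#|A| + #|B| = #|T|)%N.
Proof.
have -> : B = ~: A by apply/setP=> v; rewrite inE inB.
exact: cardsC.
Qed.

Lemma hBsize : INR #|B| <= (N + alpha * N) / 2.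
Proof. have := cardAB; move/(f_equal INR); rewrite -plusE plus_INR; lra. Qed.

Lemma nbA a u : a \in A -> adj a u -> u \in B.
Proof. move=> hA hau; rewrite inB; apply/negP=> hu; by move: (hAind hA hu); rewrite hau. Qed.

Lemma cov s u : s \in B -> u \in B -> adj s u -> s \in cover Z.
Proof. move=> hs hu h; apply/bigcupP; exists [set s; u]; [exact: hBZ | exact: set21]. Qed.

Lemma cov' s u : s \in B -> u \in B -> adj u s -> s \in cover Z.
Proof. move=> hs hu h; apply: (cov hs hu); by rewrite hsym. Qed.

Lemma coverZ : INR #|cover Z| <= 2 * alpha * N.
Proof.
have h : (#|cover Z| <= #|Z| * 2)%N.
  apply: (leq_trans (leq_card_cover Z).1).
  rewrite -sum_nat_const; apply: leq_sum => e /hZ1 [u [v [_ _ _ ->]]].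
  by rewrite cards2; case: (u != v).
move/leP: h => h; apply le_INR in h; rewrite -multE mult_INR in h.
have h2 : INR 2 = 2 by rewrite /INR; lra.
rewrite h2 in h; lra.
Qed.

Definition L := [set v in A | Rltb_ (INR (deg_in adj v B)) ((1/2 - eta) * N)].
Definition NB a := [set u in B | adj a u].

Lemma cardL : INR #|L| <= alpha * N.
Proof. exact: hB2. Qed.

Lemma hi a : a \in A -> a \notin L -> INR #|B :\: NB a| <= (eta + alpha / 2) * N.
Proof.
move=> hA hL.
have hd : (1/2 - eta) * N <= INR (deg_in adj a B).
  move: hL; rewrite inE hA /= /Rltb_; case: Rlt_dec => // h _; lra.
have E : (#|B :\: NB a| + #|NB a| = #|B|)%N.
  rewrite cardsDS; last by apply/subsetP=> u; rewrite inE => /andP[].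
  by rewrite subnK //; apply: subset_leq_card; apply/subsetP=> u; rewrite inE => /andP[].
move/(f_equal INR): E; rewrite -plusE plus_INR.
have := hBsize; rewrite /deg_in -/(NB a) in hd; lra.
Qed.


Lemma exclS (S0 : {set T}) :
  nu * N <= INR #|S0| ->
  nu * N - 4 * alpha * N - 1 <= INR #|S0 :\: (cover Z :|: pi @: L :|: pinv @: L :|: [set x])|.
Proof.
move=> h0.
set E := (cover Z :|: pi @: L :|: pinv @: L :|: [set x]).
have h1 := cardsD_ge S0 E.
have h2 : (#|E| <= #|cover Z| + #|L| + #|L| + 1)%N.
  rewrite /E; apply: (leq_trans (cardsU_le _ _)); rewrite cards1 leq_add2r.
  apply: (leq_trans (cardsU_le _ _)); rewrite card_imset; last exact: perm_inj.
  rewrite leq_add2r; apply: (leq_trans (cardsU_le _ _)); rewrite card_imset //; exact: perm_inj.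
move/leP: h1 => h1; apply le_INR in h1; rewrite -plusE plus_INR in h1.
move/leP: h2 => h2; apply le_INR in h2; rewrite -!plusE !plus_INR /= in h2.
have := coverZ; have := cardL; lra.
Qed.

Lemma Sfacts c s : s \in [set s in B | adj c s] :\: (cover Z :|: pi @: L :|: pinv @: L :|: [set x]) ->
  [/\ s \in B, adj c s, s != x & [/\ pinv s \in A, pinv s \notin L, pi s \in A & pi s \notin L]].
Proof.
rewrite in_setD !in_setU in_set1 mem_pimset mem_pimset' [s \in [set _ in B | _]]inE !negb_or.
move=> /andP [/andP [/andP [/andP [hc hL1] hL2] hx] /andP [hs hxs]].
have hpA : pinv s \in A.
  case hA: (pinv s \in A) => //; have hB' : pinv s \in B by rewrite inB hA.
  have := hham (pinv s); rewrite permKV => hh.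
  have := cov' hs hB' hh => hc'; by rewrite hc' in hc.
have hsA : pi s \in A.
  case hA: (pi s \in A) => //; have hB' : pi s \in B by rewrite inB hA.
  have := cov hs hB' (hham s) => hc'; by rewrite hc' in hc.
by split.
Qed.

Lemma Fbound (T0 : {set T}) (five : {set T}) a1 a2 (p1 p2 : {perm T}) :
  (1/4 - eta) * N <= INR #|T0| -> (#|five| <= 5)%N ->
  a1 \in A -> a1 \notin L -> a2 \in A -> a2 \notin L ->
  (#|T| %/ 5 <= #|T0 :\: (five :|: p1 @: (B :\: NB a1) :|: p2 @: (B :\: NB a2))|)%N.
Proof.
move=> h0 h5 h1 h1' h2 h2'.
have ha1 := hi h1 h1'; have ha2 := hi h2 h2'.
set E := (five :|: _ :|: _).
have c1 := cardsD_ge T0 E.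
have c2 : (#|E| <= 5 + #|B :\: NB a1| + #|B :\: NB a2|)%N.
  rewrite /E; apply: (leq_trans (cardsU_le _ _)); rewrite card_imset; last exact: perm_inj.
  rewrite leq_add2r; apply: (leq_trans (cardsU_le _ _)); rewrite card_imset; last exact: perm_inj.
  by rewrite leq_add2r.
apply: (num_F (eta := eta) (alpha := alpha)) => //; first lra.
move/leP: c1 => c1; apply le_INR in c1; rewrite -plusE plus_INR in c1.
move/leP: c2 => c2; apply le_INR in c2; rewrite -!plusE !plus_INR in c2.
have h5' : INR 5 = 5 by rewrite /INR; lra.
rewrite h5' in c2. lra.
Qed.

Lemma case1 : x \in A -> nu / 10 * N ^ 2 <= INR #|admissible_pairs adj pi x|.
Proof.
move=> hxA.
have hwB : pi x \in B := nbA hxA (hham x).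
set S := [set s in B | adj x s] :\: (cover Z :|: pi @: L :|: pinv @: L :|: [set x]).
set F := fun s => [set t in A | adj (pi x) t] :\: ([set x; pinv s; pinv (pinv (pinv s)); pi s; pi (pi (pi s))] :|: pinv @: (B :\: NB (pinv s)) :|: pi @: (B :\: NB (pi s))).
have hS : nu * N - 4 * alpha * N - 1 <= INR #|S| by apply: exclS; exact: hB3.
have hF : forall s, s \in S -> (#|T| %/ 5 <= #|F s|)%N.
  move=> s /Sfacts [_ _ _ [h1 h1' h2 h2']].
  by apply: Fbound => //; [exact: hB5 | exact: card5].
apply: (num_final hn ha hN hnN hS).
apply: (leq_trans (count_pairs hF)).
apply: (count_adm hsym hcon hham (X := A)).
move=> [s t]; rewrite inE /= => /andP [hsS htF].
have [hsB hxs hsx [hpA hpL hsA hsL]] := Sfacts hsS.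
move: htF; rewrite /F /= in_setD !in_setU mem_pimset' mem_pimset !inE !negb_or.
move=> /and3P [/andP[/andP[/andP[/andP[/andP[/andP[h1 h2] h3] h4] h5] h6] h7] htA hwt].
have hptB : pi t \in B := nbA htA (hham t).
have hpitB : pinv t \in B.
  apply: (nbA htA); have := hham (pinv t); rewrite permKV hsym //.
have a1 : adj (pinv s) (pi t) by move: h6; rewrite hptB /= ?andbT negbK.
have a2 : adj (pinv t) (pi s) by move: h7; rewrite hpitB /= ?andbT negbK hsym.
have ne1 : pinv s != pi t by apply/eqP => E; move: a1; rewrite E (negbTE (hirr _)).
have ne2 : pinv t != pi s by apply/eqP => E; move: a2; rewrite E (negbTE (hirr _)).
have n1 : [set pinv s; pi t] \notin ham_edges pi.
  apply/negP => /(ham_pair ne1) [E|E].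
  - have E' : t = pinv s by apply: (@perm_inj _ pi); rewrite E permKV.
    by rewrite E' eqxx in h2.
  - have E' : t = pinv (pinv (pinv s)) by rewrite E !permK.
    by rewrite E' eqxx in h3.
have n2 : [set pinv t; pi s] \notin ham_edges pi.
  apply/negP => /(ham_pair ne2) [E|E].
  - have E' : t = pi s by rewrite -(permKV pi t) -E.
    by rewrite E' eqxx in h4.
  - have E' : t = pi (pi (pi s)) by rewrite -E permKV.
    by rewrite E' eqxx in h5.
rewrite /goodpair /= hsx h1 hxs hwt hpA hsA -!inB hptB hpitB a1 a2 n1 n2.
done.
Qed.

Lemma case2 : x \in B -> nu / 10 * N ^ 2 <= INR #|admissible_pairs adj pi x|.
Proof.
move=> hxB.
have hwA : pi x \in A.
  case hw: (pi x \in A) => //; have hwB : pi x \in B by rewrite inB hw.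
  by move: hxZ; rewrite hBZ // hham.
set S := [set t in B | adj (pi x) t] :\: (cover Z :|: pi @: L :|: pinv @: L :|: [set x]).
set F := fun t => [set s in A | adj x s] :\: ([set x; pi t; pi (pi (pi t)); pinv t; pinv (pinv (pinv t))] :|: pi @: (B :\: NB (pi t)) :|: pinv @: (B :\: NB (pinv t))).
have hS : nu * N - 4 * alpha * N - 1 <= INR #|S| by apply: exclS; exact: hB3.
have hF : forall t, t \in S -> (#|T| %/ 5 <= #|F t|)%N.
  move=> t /Sfacts [_ _ _ [h1 h1' h2 h2']].
  by apply: Fbound => //; [exact: hB5 | exact: card5].
apply: (num_final hn ha hN hnN hS).
apply: (leq_trans (count_pairs_swap hF)).
apply: (count_adm hsym hcon hham (X := B)).
move=> [s t]; rewrite inE /= => /andP [htS hsF].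
have [htB hwt htx [hpA hpL hsA hsL]] := Sfacts htS.
move: hsF; rewrite /F /= in_setD !in_setU mem_pimset' mem_pimset !inE !negb_or.
move=> /and3P [/andP[/andP[/andP[/andP[/andP[/andP[h1 h2] h3] h4] h5] h6] h7] hsA' hxs].
have hpisB : pi s \in B := nbA hsA' (hham s).
have hpsB : pinv s \in B.
  apply: (nbA hsA'); have := hham (pinv s); rewrite permKV hsym //.
have a1 : adj (pinv s) (pi t) by move: h6; rewrite hpsB /= ?andbT negbK hsym.
have a2 : adj (pinv t) (pi s) by move: h7; rewrite hpisB /= ?andbT negbK.
have ne1 : pinv s != pi t by apply/eqP => E; move: a1; rewrite E (negbTE (hirr _)).
have ne2 : pinv t != pi s by apply/eqP => E; move: a2; rewrite E (negbTE (hirr _)).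
have n1 : [set pinv s; pi t] \notin ham_edges pi.
  apply/negP => /(ham_pair ne1) [E|E].
  - have E' : s = pi t by rewrite -(permKV pi s) E.
    by rewrite E' eqxx in h2.
  - have E' : s = pi (pi (pi t)) by rewrite -E permKV.
    by rewrite E' eqxx in h3.
have n2 : [set pinv t; pi s] \notin ham_edges pi.
  apply/negP => /(ham_pair ne2) [E|E].
  - have E' : s = pinv t by apply: (@perm_inj _ pi); rewrite E permKV.
    by rewrite E' eqxx in h4.
  - have E' : s = pinv (pinv (pinv t)) by rewrite E !permK.
    by rewrite E' eqxx in h5.
rewrite /goodpair /= h1 htx hxs hwt hpsB hpisB a1 a2 n1 n2 !inB !negbK hpA hsA.
done.
Qed.

End Core.

End Part6.
Import Part6.

Local Open Scope R_scope.

Theorem mainTheorem14 :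
  exists eta0 : R, (0 < eta0) /\
  forall eta : R, (0 < eta <= eta0) ->
  exists nu0 : R, (0 < nu0) /\
  forall nu : R, (0 < nu <= nu0) ->
  exists beta0 : R, (0 < beta0) /\
  forall beta : R, (0 < beta <= beta0) ->
  exists alpha0 : R, (0 < alpha0) /\
  forall alpha : R, (0 < alpha <= alpha0) ->
  exists n0 : nat, forall n : nat, (n0 <= n)%N ->
  forall (adj : rel 'I_n) (A B : {set 'I_n}) (Z : {set {set 'I_n}}),
    simple_graph adj ->
    superextremal adj A B alpha eta nu ->
    matching_in adj B Z ->
    (INR #|Z| <= alpha * INR n) ->
    (forall u v, u \in A -> v \in A -> ~~ adj u v) ->
    (forall u v, u \in B -> v \in B -> adj u v -> [set u; v] \in Z) ->
    (forall a b, a \in A -> b \in B -> adj a b ->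
       ((1/2 - eta) * INR n <= Rmax (INR (deg_in adj a B)) (INR (deg_in adj b A)))) ->
  forall pi : {perm 'I_n}, dir_ham_cycle adj pi ->
  forall x : 'I_n, [set x; pi x] \notin Z ->
    (beta * INR n ^ 2 <= INR #|admissible_pairs adj pi x|).
Proof.
exists (1/100); split; first lra.
move=> eta he; exists 1; split; first lra.
move=> nu hn; exists (nu / 10); split; first lra.
move=> beta hb; exists (nu / 100); split; first lra.
move=> alpha ha.
have [n1 hn1] := INR_unbounded (100 / nu).
exists (n1 + 1000)%N => n hn0 adj A B Z [hsym hirr] hsup [hZ1 hZ2] hZ hAind hBZ _ pi [_ [hham hcon]] x hxZ.
have hnR : INR (n1 + 1000) <= INR n by apply: le_INR; apply/leP.
rewrite -plusE plus_INR in hnR.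
have h1000 : INR 1000 = 1000 by rewrite INR_IZR_INZ.
rewrite h1000 in hnR.
have hn1' : 100 <= nu * INR n1.
  have : nu * (100 / nu) = 100 by field; lra.
  have := pos_INR n1; nra.
have hc : #|'I_n| = n := card_ord n.
case: hsup => [[hAB hAuB] [[_ hB1] hB2 hB3 [_ hB5 _]]].
rewrite hc in hB1 hB2 hB3 hB5.
have Hf : nu / 10 * INR n ^ 2 <= INR #|admissible_pairs adj pi x|.
  have hN : 1000 <= INR #|'I_n| by rewrite hc; have := pos_INR n1; lra.
  have hnN : 100 <= nu * INR #|'I_n| by rewrite hc; nra.
  suff : nu / 10 * INR #|'I_n| ^ 2 <= INR #|admissible_pairs adj pi x| by rewrite hc.
  case hxA: (x \in A).
  - apply: (case1 (A := A) (B := B) (Z := Z) (alpha := alpha) (eta := eta) (nu := nu)) => //; rewrite ?hc //; lra.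
  - apply: (case2 (A := A) (B := B) (Z := Z) (alpha := alpha) (eta := eta) (nu := nu)) => //; rewrite ?hc //; try lra.
    by rewrite (inB hAB hAuB) hxA.
have : 0 <= INR n ^ 2 by apply: pow_le; apply: pos_INR.
nra.
Qed.
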